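(* Fix a positive integer $k$ and a permutation $\rho$. Then $\lim_{n\to\infty}\left(\operatorname{op}_{n,k}(\rho)\right)^{1/n}$ exists and is a real number in $[1,\infty)$.
   Context: An ordered set partition of $[n]$ into $k$ blocks is a sequence $B_1/B_2/\cdots/B_k$ of nonempty, pairwise disjoint subsets of $[n]$ whose union is $[n]$; the order of the blocks matters, but not the order of elements within a block. For a permutation $\rho=\rho_1\cdots\rho_m\in\mathcal{S}_m$, an ordered partition $B_1/\cdots/B_k$ contains $\rho$ if there are block indices $i_1<i_2<\cdots<i_m$ and elements $b_j\in B_{i_j}$ such that $b_1\cdots b_m$ is order-isomorphic to $\rho$ (i.e. $b_a<b_c$ iff $\rho_a<\rho_c$); otherwise it avoids $\rho$. $\operatorname{op}_{n,k}(\rho)$ denotes the number of $\rho$-avoiding ordered partitions of $[n]$ into $k$ blocks. *)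

(* Defs.v *)
From HB Require Import structures.
From mathcomp Require Import all_boot all_order all_algebra all_fingroup.

Set Implicit Arguments. Unset Strict Implicit. Unset Printing Implicit Defensive.

(* [n] is modelled by 'I_n = {0,...,n-1} (order-isomorphic to {1,...,n}).
   An ordered set partition into k blocks is B_0/.../B_{k-1}, B : 'I_k -> {set 'I_n}. *)
Definition is_ord_part (n k : nat) (B : {ffun 'I_k -> {set 'I_n}}) : bool :=
  [&& [forall i, B i != set0],
      [forall i, forall j, (i != j) ==> [disjoint B i & B j]]
    & \bigcup_i B i == finset.setT].

Definition op_contains (n k m : nat) (B : {ffun 'I_k -> {set 'I_n}}) (rho : 'S_m)
  : bool :=
  [exists f : {ffun 'I_m -> 'I_k}, exists b : {ffun 'I_m -> 'I_n},
     [forall a : 'I_m, (b a \in B (f a)) &&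
       [forall c : 'I_m, ((a < c)%N ==> (f a < f c)%N) &&
                         ((b a < b c)%N == (rho a < rho c)%N)]]].

Definition op_count (n k m : nat) (rho : 'S_m) : nat :=
  #|[set B : {ffun 'I_k -> {set 'I_n}} | is_ord_part B && ~~ op_contains B rho]|.

(* Main.v *)
Require Import Defs.
From HB Require Import structures.
From mathcomp Require Import all_boot all_order all_algebra all_fingroup zify.
Set Implicit Arguments. Unset Strict Implicit. Unset Printing Implicit Defensive.

Section Comb.
Variables (n k m : nat) (rho : 'S_m).

Definition wcont (w : {ffun 'I_n -> 'I_k}) : bool :=
  [exists b : {ffun 'I_m -> 'I_n}, [forall a : 'I_m, forall c : 'I_m,
     ((a < c) ==> (w (b a) < w (b c))) && ((b a < b c) == (rho a < rho c))]].

Definition Bof (w : {ffun 'I_n -> 'I_k}) : {ffun 'I_k -> {set 'I_n}} :=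
  [ffun i => [set x | w x == i]].

Lemma Bof_inj : injective Bof.
Proof.
move=> w1 w2 E; apply/ffunP=> x.
have : x \in Bof w1 (w1 x) by rewrite ffunE inE.
by rewrite E ffunE inE => /eqP.
Qed.

Lemma Bof_contains w : op_contains (Bof w) rho -> wcont w.
Proof.
case/existsP=> f /existsP[b /forallP H].
have Hw a : w (b a) = f a by have /andP[] := H a; rewrite ffunE inE => /eqP.
apply/existsP; exists b; apply/forallP=> a; apply/forallP=> c.
by have /andP[_ /forallP/(_ c)/andP[H1 H2]] := H a; rewrite !Hw H1 H2.
Qed.

Section Wof.
Variable i0 : 'I_k.
Definition wof (B : {ffun 'I_k -> {set 'I_n}}) : {ffun 'I_n -> 'I_k} :=
  [ffun x => odflt i0 [pick i | x \in B i]].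

Lemma wof_in B : is_ord_part B -> forall x, x \in B (wof B x).
Proof.
case/and3P=> _ _ /eqP cov x.
have : x \in \bigcup_i B i by rewrite cov inE.
case/bigcupP=> i _ xi.
rewrite ffunE; case: pickP => [j //|/(_ i)]; by rewrite xi.
Qed.

Lemma wof_eq B : is_ord_part B -> forall x i, (x \in B i) = (wof B x == i).
Proof.
move=> PB x i; have xin := wof_in PB x.
case/and3P: PB => _ /forallP dis _.
apply/idP/eqP => [xi|<-//].
apply/eqP; apply/negPn/negP => ne.
move: (dis (wof B x)) => /forallP/(_ i); rewrite ne /= => /disjointFr/(_ xin).
by rewrite xi.
Qed.

Lemma wof_Bof B : is_ord_part B -> Bof (wof B) = B.
Proof. by move=> PB; apply/ffunP=> i; apply/setP=> x; rewrite ffunE inE wof_eq. Qed.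

Lemma wof_contains B : is_ord_part B -> wcont (wof B) -> op_contains B rho.
Proof.
move=> PB /existsP[b /forallP H]; apply/existsP; exists [ffun a => wof B (b a)].
apply/existsP; exists b.
apply/forallP=> a; rewrite ffunE wof_in //=; apply/forallP=> c; rewrite !ffunE.
by have := forallP (H a) c; rewrite !ffunE.
Qed.

Lemma op_le_words :
  op_count n k rho <= #|[set w : {ffun 'I_n -> 'I_k} | ~~ wcont w]|.
Proof.
rewrite /op_count -(@card_in_imset _ _ wof); last first.
  move=> B1 B2; rewrite !inE => /andP[P1 _] /andP[P2 _] E.
  by rewrite -(wof_Bof P1) -(wof_Bof P2) E.
apply: subset_leq_card; apply/subsetP=> w0 /imsetP[B HB ->]; move: HB; rewrite (@in_set _ (fun B0 => is_ord_part B0 && ~~ op_contains B0 rho)); case/andP=> PB nc.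
rewrite (@in_set _ (fun w => ~~ wcont w)); apply: contra nc; exact: wof_contains.
Qed.
End Wof.
End Comb.


Section Pot.
Variables (n k m : nat) (rho : 'S_m) (w : {ffun 'I_n -> 'I_k}).

Definition embP (u : {ffun 'I_m -> 'I_k}) (p j : nat) (t : {ffun 'I_m -> 'I_n}) : bool :=
  [forall a : 'I_m, (a < j) ==> [&& (t a < p), (w (t a) == u a) &
        [forall c : 'I_m, ((a < c) && (c < j)) ==> (t a < t c)]]].
Definition emb u p j := [exists t, embP u p j t].
Definition gpot u p := \max_(j < m.+1 | (val j == 0) || emb u p j) j.
Definition Phi p := \sum_(u : {ffun 'I_m -> 'I_k}) gpot u p.

Lemma embP_mono u p q j t : p <= q -> embP u p j t -> embP u q j t.
Proof.
move=> pq /forallP H; apply/forallP=> a; apply/implyP=> aj.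
have /and3P[H1 H2 H3] := implyP (H a) aj.
by rewrite H2 H3 (leq_trans H1 pq).
Qed.

Lemma gpot_mono u p q : p <= q -> gpot u p <= gpot u q.
Proof.
move=> pq; apply/bigmax_leqP => j /orP Pj; apply: leq_bigmax_cond.
case: Pj => [->//|/existsP[t Ht]]; apply/orP; right; apply/existsP; exists t.
exact: embP_mono Ht.
Qed.

Lemma Phi_mono p q : p <= q -> Phi p <= Phi q.
Proof. by move=> pq; apply: leq_sum => u _; apply: gpot_mono. Qed.

Lemma gpot_le u p : gpot u p <= m.
Proof. by apply/bigmax_leqP => j _; rewrite -ltnS. Qed.

Lemma Phi_le p : Phi p <= k ^ m * m.
Proof.
apply: leq_trans (_ : \sum_(u : {ffun 'I_m -> 'I_k}) m <= _).
  by apply: leq_sum => u _; apply: gpot_le.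
by rewrite sum_nat_const card_ffun !card_ord.
Qed.

Lemma gpot_att u p (x0 : 'I_n) : exists t, embP u p (gpot u p) t.
Proof.
have [i0 Pi0 E] := @eq_bigmax_cond _ [pred j : 'I_m.+1 | (val j == 0) || emb u p j]
   (fun j => val j) (ltac:(apply/card_gt0P; exists ord0; by rewrite inE)).
have -> : gpot u p = val i0 by exact: E.
move: Pi0; rewrite inE => /orP[/eqP->|/existsP[t Ht]]; last by exists t.
by exists [ffun=> x0]; apply/forallP.
Qed.

Lemma full_cont (h : 'I_m -> 'I_k) (hinc : forall a c : 'I_m, a < c -> h a < h c) p t :
  embP [ffun j => h ((rho^-1)%g j)] p m t -> wcont rho w.
Proof.
move/forallP=> H.
have tinc (x y : 'I_m) : x < y -> t x < t y.
  move=> xy; have /and3P[_ _ /forallP/(_ y)] := implyP (H x) (ltn_ord x).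
  by rewrite xy ltn_ord => /implyP; apply.
have tiff (x y : 'I_m) : (t x < t y) = (x < y).
  case: (ltngtP x y) => [xy|yx|/val_inj->]; [by rewrite tinc | | by rewrite ltnn].
  by apply/negbTE; rewrite -leqNgt ltnW // tinc.
have wt (x : 'I_m) : w (t x) = h ((rho^-1)%g x).
  by have /and3P[_ /eqP -> _] := implyP (H x) (ltn_ord x); rewrite ffunE.
apply/existsP; exists [ffun a => t (rho a)]; apply/forallP=> a; apply/forallP=> c.
rewrite !ffunE !wt !permK tiff eqxx andbT; apply/implyP; exact: hinc.
Qed.

End Pot.


Section Prog.
Variables (n k m : nat) (rho : 'S_m) (w : {ffun 'I_n -> 'I_k}).
Hypothesis avoid : ~~ wcont rho w.

Lemma progress (h : 'I_m -> 'I_k) (x : 'I_m -> 'I_n) p q :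
  (forall a c : 'I_m, a < c -> h a < h c) ->
  (forall a, w (x a) = h a) -> (forall a, p <= x a < q) -> 0 < m ->
  Phi m w p < Phi m w q.
Proof.
move=> hinc wx win m0.
set u : {ffun 'I_m -> 'I_k} := [ffun j => h ((rho^-1)%g j)].
have key : gpot w u p < gpot w u q.
  have [t Ht] := gpot_att w u p (x (Ordinal m0)).
  set j := gpot w u p in Ht *.
  have jm : j < m.
    rewrite ltn_neqAle gpot_le andbT; apply/eqP => E.
    by move: Ht; rewrite E => Ht; move: avoid; rewrite (full_cont hinc Ht).
  pose J : 'I_m := Ordinal jm.
  pose y := x ((rho^-1)%g J).
  have wy : w y = u J by rewrite /y wx ffunE.
  have [py yq] := andP (win ((rho^-1)%g J)).
  pose t' : {ffun 'I_m -> 'I_n} := [ffun a => if a == J then y else t a].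
  have Ht' : embP w u q j.+1 t'.
    apply/forallP=> a; apply/implyP=> aj; rewrite !ffunE.
    case: eqP => [->|/eqP aJ].
      rewrite yq /y wx eqxx /=; apply/forallP=> c; apply/implyP=> /andP[Jc cj].
      by move: Jc; rewrite /= ltnNge -ltnS cj.
    have aj' : a < j by rewrite ltn_neqAle -ltnS aj andbT; apply: contra aJ => /eqP E; apply/eqP/val_inj.
    have /and3P[H1 H2 /forallP H3] := implyP (forallP Ht a) aj'; rewrite ffunE in H2.
    rewrite (leq_trans H1 (leq_trans py (ltnW yq))) H2 /=.
    apply/forallP=> c; apply/implyP=> /andP[ac cj]; rewrite ffunE.
    case: eqP => [_|/eqP cJ]; first exact: leq_trans H1 py.
    have cj' : c < j by rewrite ltn_neqAle -ltnS cj andbT; apply: contra cJ => /eqP E; apply/eqP/val_inj.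
    by have := implyP (H3 c); rewrite ac cj'; apply.
  apply: leq_trans (_ : val (Ordinal (jm : j.+1 < m.+1)) <= _) => //.
  apply: (@leq_bigmax_cond _ _ (fun i : 'I_m.+1 => val i)).
  apply/orP; right; apply/existsP; exists t'; exact: Ht'.
rewrite /Phi (bigD1 u) //= [X in _ < X](bigD1 u) //=.
rewrite -addSn leq_add // ; apply: leq_sum => v _; apply: gpot_mono.
by have := win (Ordinal m0) => /andP[a b]; apply: ltnW; apply: leq_ltn_trans b.
Qed.

End Prog.


Section Lab.
Variables (n k m : nat) (rho : 'S_m) (w : {ffun 'I_n -> 'I_k}).
Hypothesis avoid : ~~ wcont rho w.
Hypothesis m1 : 1 < m.

Definition lab (x : nat) := 2 * Phi m w x + (Phi m w x < Phi m w x.+1).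

Lemma lab_cases x : (lab x = 2 * Phi m w x + 1 /\ Phi m w x < Phi m w x.+1) \/
                    (lab x = 2 * Phi m w x /\ Phi m w x.+1 <= Phi m w x).
Proof.
rewrite /lab; case: (ltnP (Phi m w x) (Phi m w x.+1)) => b.
  by left.
by right; rewrite addn0.
Qed.

Lemma lab_mono x y : x <= y -> lab x <= lab y.
Proof.
rewrite leq_eqVlt => /orP[/eqP->//|xy].
have h1 := Phi_mono m w (xy : x.+1 <= y).
have h0 := Phi_mono m w (leqnSn x).
have h2 := Phi_mono m w (leqnSn y).
case: (lab_cases x) => [[-> ?]|[-> ?]]; case: (lab_cases y) => [[-> ?]|[-> ?]]; lia.
Qed.

Definition letters (v : nat) : {set 'I_k} := [set w x | x in [set x : 'I_n | lab x == v]].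

Lemma letters_le v : #|letters v| <= minn k m.-1.
Proof.
rewrite leq_min; apply/andP; split.
  by rewrite -[X in _ <= X]card_ord max_card.
rewrite leqNgt; apply/negP => big.
set W := letters v in big.
have mW : m <= #|W| by lia.
pose s := sort leq [seq val i | i <- enum W].
have ss : size s = #|W| by rewrite size_sort size_map -cardE.
have slt : sorted ltn s.
  rewrite ltn_sorted_uniq_leq sort_uniq map_inj_uniq ?enum_uniq //=; last exact: val_inj.
  by apply: sort_sorted; exact: leq_total.
have smem i : i < size s -> exists l : 'I_k, (l \in W) && (val l == nth 0 s i).
  move=> ilt; have : nth 0 s i \in s by apply: mem_nth.
  by rewrite mem_sort => /mapP[l]; rewrite mem_enum => lW ->; exists l; rewrite lW eqxx.
have /fin_all_exists [h Hh] : forall a : 'I_m, exists l : 'I_k, (l \in W) && (val l == nth 0 s a).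
  move=> a; apply: smem; rewrite ss; exact: leq_trans (ltn_ord a) mW.
have hinc (a c : 'I_m) : a < c -> h a < h c.
  move=> ac; have /andP[_ /eqP->] := Hh a; have /andP[_ /eqP->] := Hh c.
  apply: (sorted_ltn_nth ltn_trans 0 slt) => //; rewrite inE ss.
    exact: leq_trans (ltn_ord a) mW.
  exact: leq_trans (ltn_ord c) mW.
have /fin_all_exists [x Hx] : forall a : 'I_m, exists y : 'I_n, (lab y == v) && (w y == h a).
  move=> a; have /andP[ha _] := Hh a.
  case/imsetP: ha => y; rewrite inE => ly hy; exists y; by rewrite ly hy eqxx.
have wx a : w (x a) = h a by have /andP[_ /eqP] := Hx a.
have lx a : lab (x a) = v by have /andP[/eqP] := Hx a.
pose o : 'I_m := Ordinal (ltnW m1).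
case: (@arg_minnP _ o xpredT (fun a => val (x a)) isT) => a0 _ Hmin.
case: (@arg_maxnP _ o xpredT (fun a => val (x a)) isT) => a1 _ Hmax.
have win a : x a0 <= x a < (x a1).+1 by rewrite Hmin //= ltnS; exact: Hmax.
have prog := progress avoid hinc wx win (ltnW m1).
have le01 : x a0 <= x a1 by rewrite Hmin.
have [lt|eq] : x a0 < x a1 \/ val (x a0) = val (x a1).
  case: (ltngtP (x a0) (x a1)) => [hh|hh|hh]; [by left | by move: le01; rewrite leqNgt hh | by right].
  have f1 := Phi_mono m w (lt : (x a0).+1 <= x a1).
  have f2 := Phi_mono m w (leqnSn (x a0)).
  have f3 := Phi_mono m w (leqnSn (x a1)).
  have e0 := lx a0; have e1 := lx a1.
  case: (lab_cases (x a0)) e0 => [[-> ?]|[-> ?]]; case: (lab_cases (x a1)) e1 => [[-> ?]|[-> ?]]; lia.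
have allx a : val (x a) = x a0 by apply/eqP; rewrite eqn_leq Hmin // eq andbT; exact: Hmax.
pose one : 'I_m := Ordinal m1.
have := hinc o one isT; rewrite -!wx.
have -> : x o = x one by apply: val_inj; rewrite !allx.
by rewrite ltnn.
Qed.

End Lab.


Lemma card_below n (A : {set 'I_n}) x : (forall y : 'I_n, y \in A -> y < x) -> #|A| <= x.
Proof.
move=> H; rewrite cardE -(size_map val) -[X in _ <= X](size_iota 0).
apply: uniq_leq_size; first by rewrite map_inj_uniq ?enum_uniq //; exact: val_inj.
move=> z /mapP[y]; rewrite mem_enum => yA ->; rewrite mem_iota /= add0n; exact: H.
Qed.

Lemma card_above n (A : {set 'I_n}) x : x <= n -> (forall y : 'I_n, y < x -> y \in A) -> x <= #|A|.
Proof.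
move=> xn H; rewrite -[X in X <= _](size_iota 0) cardE -(size_map val).
apply: uniq_leq_size; first exact: iota_uniq.
move=> i; rewrite mem_iota add0n /= => ix; apply/mapP; exists (Ordinal (leq_trans ix xn)) => //.
by rewrite mem_enum; apply: H.
Qed.

Lemma card_bigcup_le (I T : finType) (P : {pred I}) (F : I -> {set T}) :
  #|\bigcup_(i in P) F i| <= \sum_(i in P) #|F i|.
Proof.
elim/big_ind2 : _ => // [|m A n B Am Bn]; first by rewrite cards0.
by rewrite (leq_trans (leq_card_setU _ _))// leq_add.
Qed.

Lemma foldr_le (s : seq nat) b : all (fun x => x <= b) s -> foldr muln 1 s <= b ^ size s.
Proof.
elim: s => //= x s IH /andP[xb H]; rewrite expnS leq_mul //; exact: IH.
Qed.

Section Count.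
Variables (n k m : nat) (rho : 'S_m).
Hypothesis m1 : 1 < m.
Definition Kc := (2 * (k ^ m * m)).+2.
Definition L0 := minn k m.-1.

Definition labc (c : {ffun 'I_Kc -> 'I_n.+1}) (x : 'I_n) : nat := \max_(j : 'I_Kc | c j <= x) j.
Definition Fam (c : {ffun 'I_Kc -> 'I_n.+1}) (S : {ffun 'I_Kc -> {set 'I_k}}) : {set {ffun 'I_n -> 'I_k}} :=
  [set w' : {ffun 'I_n -> 'I_k} | [forall x, w' x \in S (inord (labc c x))]].

Lemma Fam_card (c : {ffun 'I_Kc -> 'I_n.+1}) (S : {ffun 'I_Kc -> {set 'I_k}}) : (forall j, #|S j| <= L0) -> #|Fam c S| <= L0 ^ n.
Proof.
move=> HS.
have -> : #|Fam c S| = #|family (fun x : 'I_n => mem (S (inord (labc c x))))|.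
  apply: eq_card => w'; rewrite inE; apply/forallP/familyP => H x; exact: H.
rewrite card_family.
set s := [seq _ | x : _].
have -> : n = size s by rewrite /s size_image card_ord.
apply: foldr_le; apply/allP => z /mapP[x _ ->].
exact: HS.
Qed.


Definition Iset := [set cs : {ffun 'I_Kc -> 'I_n.+1} * {ffun 'I_Kc -> {set 'I_k}} |
   [forall j, #|cs.2 j| <= L0]].

Lemma avoid_in_union (w : {ffun 'I_n -> 'I_k}) :
  ~~ wcont rho w -> w \in \bigcup_(cs in Iset) Fam cs.1 cs.2.
Proof.
move=> av.
have labK (x : nat) : lab m w x < Kc.
  have := Phi_le m w x; have := Phi_le m w x.+1.
  case: (lab_cases m w x) => [[-> _]|[-> _]]; rewrite /Kc; lia.
pose cw : {ffun 'I_Kc -> 'I_n.+1} := [ffun j : 'I_Kc => inord #|[set y : 'I_n | lab m w y < j]|].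
pose Sw : {ffun 'I_Kc -> {set 'I_k}} := [ffun j : 'I_Kc => letters m w j].
have cwv (j : 'I_Kc) : (cw j : nat) = #|[set y : 'I_n | lab m w y < j]|.
  rewrite ffunE; apply: inordK; rewrite ltnS -[X in _ <= X]card_ord; exact: max_card.
have cwle (j : 'I_Kc) (x : 'I_n) : (cw j <= x) = (j <= lab m w x).
  rewrite cwv; apply/idP/idP => [H|H].
    rewrite leqNgt; apply/negP => lt.
    have : (x : nat).+1 <= #|[set y : 'I_n | lab m w y < j]|.
      apply: card_above => // y; rewrite ltnS inE => yx.
      exact: leq_ltn_trans (lab_mono av m1 yx) lt.
    by rewrite ltnNge H.
  apply: card_below => y; rewrite inE => lt.
  rewrite ltnNge; apply/negP => xy.
  by have := leq_trans H (lab_mono av m1 xy); rewrite leqNgt lt.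
have labcw (x : 'I_n) : labc cw x = lab m w x.
  apply/eqP; rewrite eqn_leq; apply/andP; split.
    by apply/bigmax_leqP => j; rewrite cwle.
  apply: leq_trans (_ : val (Ordinal (labK x)) <= _) => //.
  apply: (@leq_bigmax_cond _ _ (fun j : 'I_Kc => val j)); by rewrite cwle.
apply/bigcupP; exists (cw, Sw).
  by rewrite inE; apply/forallP => j /=; rewrite ffunE; exact: (letters_le av m1).
rewrite inE; apply/forallP => x /=.
rewrite labcw ffunE inordK //; apply/imsetP; exists x => //; by rewrite inE.
Qed.

Lemma words_upper :
  #|[set w : {ffun 'I_n -> 'I_k} | ~~ wcont rho w]| <=
   #|{ffun 'I_Kc -> 'I_n.+1}| * #|{ffun 'I_Kc -> {set 'I_k}}| * L0 ^ n.
Proof.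
apply: leq_trans (_ : #|\bigcup_(cs in Iset) Fam cs.1 cs.2| <= _).
  apply: subset_leq_card; apply/subsetP => w; rewrite inE; exact: avoid_in_union.
apply: leq_trans (card_bigcup_le _ _) _.
apply: leq_trans (_ : \sum_(cs in Iset) L0 ^ n <= _).
  apply: leq_sum => cs; rewrite inE => /forallP H; exact: Fam_card.
by rewrite sum_nat_const leq_mul2r -card_prod max_card orbT.
Qed.

End Count.


Lemma P_avoid n k m (rho : 'S_m) (w : {ffun 'I_n -> 'I_k}) (s L : nat) (m0 : 0 < m) :
  s + L = k -> L <= m.-1 -> 1 < m ->
  (forall x y, w x < s -> w x < w y ->
      (if 0 < rho (Ordinal m0) then x < y else y < x)) ->
  ~~ wcont rho w.
Proof.
move=> sLk Lm m1 P; apply/negP => /existsP [b /forallP H].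
have inc (a c : 'I_m) : a < c -> w (b a) < w (b c).
  by have /andP[/implyP ? _] := forallP (H a) c.
have pat (a c : 'I_m) : (b a < b c) = (rho a < rho c).
  by have /andP[_ /eqP ?] := forallP (H a) c.
set o := Ordinal m0.
have w0s : w (b o) < s.
  rewrite ltnNge; apply/negP => so.
  have cl i (hi : i < m) : s + i <= w (b (Ordinal hi)).
    elim: i hi => [|i IH] hi.
      by rewrite addn0 (_ : Ordinal hi = o) //; apply: val_inj.
    have hi' : i < m by apply: ltnW.
    have := IH hi'; have := inc (Ordinal hi') (Ordinal hi) (ltnSn i); lia.
  have hm : m.-1 < m by lia.
  move: (cl m.-1 hm) (ltn_ord (w (b (Ordinal hm)))); lia.
have [d|d] := boolP (0 < rho o); rewrite ?d ?(negbTE d) in P.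
  set c := (rho^-1)%g o.
  have rc : rho c = o by rewrite /c permKV.
  have oc : o < c.
    rewrite lt0n; apply/negP => /eqP c0.
    have : c = o by apply: val_inj.
    by move=> E; move: d; rewrite -E rc.
  have := P _ _ w0s (inc _ _ oc); rewrite pat rc.
  by rewrite ltnNge; move/negP; apply; apply: ltnW.
have one : 1 < m by [].
set e := Ordinal one.
have := P _ _ w0s (inc o e isT); rewrite pat.
have r0 : rho o = o by apply/eqP; rewrite -val_eqE /=; move: d; rewrite lt0n negbK.
by rewrite r0.
Qed.

Section Lower.
Variables (k' N m : nat) (rho : 'S_m).
Hypothesis m1 : 1 < m.
Local Notation k := k'.+1.
Local Notation n := (k'.+1 + N.+1).
Local Notation L := (L0 k m).
Let s := k - L.

Lemma Lk : L <= k. Proof. by rewrite /L0 geq_minl. Qed.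
Lemma Lm : L <= m.-1. Proof. by rewrite /L0 geq_minr. Qed.
Lemma sL : s + L = k. Proof. by rewrite /s subnK // Lk. Qed.

Definition pos (d : bool) (x : 'I_n) : nat := if d then (x : nat) else n - x.+1.

Definition wg d (g : {ffun 'I_N.+1 -> 'I_L}) : {ffun 'I_n -> 'I_k} :=
  [ffun x => if pos d x < k then inord (pos d x) else inord (s + g (inord (pos d x - k)))].

Lemma wg_lo d g x : pos d x < k -> (wg d g x : nat) = pos d x.
Proof. by move=> h; rewrite ffunE h inordK. Qed.

Lemma wg_hi d g x : k <= pos d x -> (wg d g x : nat) = s + g (inord (pos d x - k)).
Proof.
move=> h; rewrite ffunE ltnNge h /= inordK //.
have := ltn_ord (g (inord (pos d x - k))); have := sL; lia.
Qed.

Lemma pos_ex d i : i < n -> exists X : 'I_n, pos d X = i.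
Proof.
move=> hi; case: d; first by exists (Ordinal hi).
have h : n - i.+1 < n by lia.
by exists (Ordinal h); rewrite /pos /=; lia.
Qed.

Lemma wg_inj d : injective (wg d).
Proof.
move=> g1 g2 E; apply/ffunP => z.
have hz : k + z < n by have := ltn_ord z; lia.
have [X HX] := pos_ex d hz.
have : (wg d g1 X : nat) = wg d g2 X by rewrite E.
rewrite !wg_hi HX ?leq_addr // addKn inord_val => /eqP; rewrite eqn_add2l => /eqP.
exact: val_inj.
Qed.

Lemma wg_P d g x y : wg d g x < s -> wg d g x < wg d g y -> if d then x < y else y < x.
Proof.
move=> h1 h2.
have px : pos d x < k.
  rewrite ltnNge; apply/negP => hk; move: h1; rewrite wg_hi //; lia.
have pxy : pos d x < pos d y.
  case: (ltnP (pos d y) k) => py.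
    by move: h2; rewrite wg_lo // wg_lo.
  exact: leq_trans px py.
move: pxy; clear h1 h2 px; rewrite /pos; case: d => //; have := ltn_ord x; have := ltn_ord y; lia.
Qed.

Lemma wg_part d g : is_ord_part (Bof (wg d g)).
Proof.
apply/and3P; split.
- apply/forallP => i; apply/set0Pn.
  have hi : (i : nat) < n by have := ltn_ord i; lia.
  have [X HX] := pos_ex d hi.
  exists X; rewrite ffunE inE; apply/eqP/val_inj => /=. rewrite wg_lo HX //.
- apply/forallP => i; apply/forallP => j; apply/implyP => ij.
  rewrite disjoints_subset; apply/subsetP => x; rewrite !ffunE !inE => /eqP ->; by [].
- apply/eqP/setP => x; rewrite inE; apply/bigcupP; exists (wg d g x) => //.
  by rewrite ffunE inE.
Qed.

Lemma lower_bound : L ^ N.+1 <= op_count n k rho.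
Proof.
have m0 : 0 < m by apply: ltnW.
set d := 0 < rho (Ordinal m0).
have -> : L ^ N.+1 = #|[set Bof (wg d g) | g in [set: {ffun 'I_N.+1 -> 'I_L}]]|.
  rewrite card_imset ?cardsT ?card_ffun ?card_ord //.
  by move=> g1 g2 /Bof_inj /wg_inj.
apply: subset_leq_card; apply/subsetP => B /imsetP[g _ ->].
rewrite (@in_set _ (fun B0 => is_ord_part B0 && ~~ op_contains B0 rho)) wg_part /=.
apply/negP => /Bof_contains; apply/negP.
apply: (P_avoid (s := s) (L := L) (m0 := m0) sL Lm m1) => x y h1 h2.
exact: (wg_P h1 h2).
Qed.

End Lower.

From mathcomp Require Import all_classical all_reals all_analysis.
From mathcomp Require Import ring lra.
Import Order.TTheory GRing.Theory Num.Theory.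
Import numFieldNormedType.Exports.
Local Open Scope classical_set_scope.
Local Open Scope ring_scope.

Section A.
Variable R : realType.

Lemma ev_ger (r : R) : exists N : nat, forall n : nat, (N <= n)%N -> r <= n%:R.
Proof. have [N _ H] := nbhs_infty_ger r. by exists N => n Nn; apply: H. Qed.

Lemma ln_small (d : R) : 0 < d -> exists N : nat, forall n : nat, (N <= n)%N ->
  ln (n.+1)%:R <= d * n%:R.
Proof.
move=> d0; have [N HN] := ev_ger (2 / d ^+ 2).
exists N => n Nn; have := HN n Nn => big.
rewrite -ler_expR lnK ?posrE ?ltr0n //.
have := @expR_ge1Dxn _ (d * n%:R) 1 (mulr_ge0 (ltW d0) (ler0n _ _)); apply: le_trans.
have h2 : 2 <= d ^+ 2 * n%:R.
  by rewrite -ler_pdivrMl ?exprn_gt0 // mulrC.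
rewrite (_ : 2`!%:R = 2 :> R) // -natr1 addrC lerD2l.
have n0 : 0 <= n%:R :> R by [].
nra.
Qed.

Lemma root_squeeze (a : nat -> nat) (L C K k : nat) : (1 <= L)%N -> (0 < C)%N ->
  (forall n, (k < n)%N -> (L ^ (n - k) <= a n)%N) ->
  (forall n, (a n <= (n.+1) ^ K * C * L ^ n)%N) ->
  (fun n => (a n)%:R `^ (n%:R^-1)) @ \oo --> (L%:R : R).
Proof.
move=> L1 C0 Hlo Hup.
set lL := ln (L%:R : R).
have lL0 : 0 <= lL by apply: ln_ge0; rewrite ler1n.
set lC := ln (C%:R : R).
have lC0 : 0 <= lC by apply: ln_ge0; rewrite ler1n.
pose l n := n%:R^-1 * ln ((a n)%:R : R).
have lim : l @ \oo --> lL.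
  apply/cvgrPdist_le => e e0.
  pose d := e / (2 * (K%:R + 1)).
  have K10 : 0 < 2 * (K%:R + 1) :> R by rewrite mulr_gt0 // ltr_wpDl.
  have d0 : 0 < d by rewrite divr_gt0.
  have dE : d * (2 * (K%:R + 1)) = e by rewrite /d mulfVK // gt_eqF.
  have [N1 H1] := ev_ger (k%:R * lL / e).
  have [N2 H2] := ev_ger (2 * lC / e).
  have [N3 H3] := @ln_small d d0.
  exists (maxn (maxn N1 N2) (maxn N3 k.+1)) => // n /= Nn.
  rewrite !geq_max in Nn; case/andP: Nn => /andP[n1 n2] /andP[n3 kn].
  have n0 : 0 < n%:R :> R by rewrite ltr0n; apply: leq_trans kn.
  have ap : 0 < (a n)%:R :> R.
    rewrite ltr0n; apply: leq_trans (Hlo n kn); by rewrite expn_gt0 (leq_trans _ L1).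
  set t := l n.
  have ut : ln ((a n)%:R : R) = n%:R * t by rewrite /t /l mulrA mulfV ?mul1r // gt_eqF.
  have lo : (n%:R - k%:R) * lL <= n%:R * t.
    rewrite -ut -natrB 1?ltnW // mulr_natl /lL -lnXn ?ltr0n //.
    by rewrite ler_ln ?posrE ?ap ?exprn_gt0 ?ltr0n // -natrX ler_nat; exact: Hlo.
  have up : n%:R * t <= K%:R * ln (n.+1)%:R + lC + n%:R * lL.
    have e1 : K%:R * ln (n.+1)%:R = ln ((n.+1)%:R ^+ K : R) by rewrite lnXn ?ltr0n // mulr_natl.
    have e2 : n%:R * lL = ln (L%:R ^+ n : R) by rewrite lnXn ?ltr0n // mulr_natl.
    rewrite -ut e1 e2 /lC -!lnM ?posrE ?exprn_gt0 ?mulr_gt0 ?ltr0n //.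
    by rewrite ler_ln ?posrE ?ap ?mulr_gt0 ?exprn_gt0 ?ltr0n // -!natrX -!natrM ler_nat; apply: Hup.
  have f1 : k%:R * lL <= n%:R * e by rewrite -ler_pdivrMr //; exact: H1.
  have f2 : 2 * lC <= n%:R * e by rewrite -ler_pdivrMr //; exact: H2.
  have f3 := H3 n n3.
  have K0 : 0 <= K%:R :> R by [].
  have p1 : K%:R * ln (n.+1)%:R <= K%:R * (d * n%:R) by rewrite ler_wpM2l.
  have Kd : K%:R * d <= e / 2.
    have -> : e / 2 = d * (K%:R + 1) by rewrite -dE; field.
    by rewrite mulrDr mulr1 mulrC lerDl ltW.
  have p2 : K%:R * (d * n%:R) <= e / 2 * n%:R by rewrite mulrA ler_wpM2r.
  have g1 : n%:R * (lL - t) <= n%:R * e by lra.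
  have g2 : n%:R * (t - lL) <= n%:R * e by lra.
  rewrite ler_norml; apply/andP; split.
    by rewrite lerNl opprB -(ler_pM2l n0).
  by rewrite -(ler_pM2l n0).
have LE : expR lL = L%:R by rewrite /lL lnK // posrE ltr0n.
rewrite -LE.
apply: cvg_trans (continuous_cvg _ _ lim); last exact: continuous_expR.
apply: near_eq_cvg; exists k.+1 => // n /= kn.
have ap : (a n)%:R != 0 :> R.
  rewrite pnatr_eq0 -lt0n; apply: leq_trans (Hlo n kn); by rewrite expn_gt0 (leq_trans _ L1).
by rewrite /powR (negbTE ap) /l mulrC.
Qed.
End A.

Theorem theorem11 (R : realType) (k m : nat) (rho : 'S_m) :
  (0 < k)%N -> (2 <= m)%N ->
  exists L : R, 1 <= L /\
    (fun n : nat => ((op_count n k rho)%:R : R) `^ (n%:R^-1)) @ \oo --> L.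
Proof.
case: k => [//|k'] _ m1.
have L1 : (1 <= L0 k'.+1 m)%N by rewrite /L0 leq_min; apply/andP; split => //; lia.
exists (L0 k'.+1 m)%:R; split; first by rewrite ler1n.
apply: (@root_squeeze R (fun n => op_count n k'.+1 rho) (L0 k'.+1 m)
   #|{ffun 'I_(Kc k'.+1 m) -> {set 'I_k'.+1}}| (Kc k'.+1 m) k'.+1) => //.
- by apply/card_gt0P; exists [ffun=> (finset.set0 : {set 'I_k'.+1})].
- move=> n kn.
  have [N ->] : exists N, n = k'.+1 + N.+1 by exists (n - k'.+2)%N; lia.
  rewrite addKn; exact: lower_bound.
- move=> n; have h1 := @op_le_words n k'.+1 m rho ord0.
  have h2 := @words_upper n k'.+1 m rho m1.
  rewrite card_ffun !card_ord in h2; exact: leq_trans h1 h2.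
Qed.
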